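(* Let $G$ be a finite group, $H\leq G$, $T$ a right transversal of $H$ in $G$ containing $1$, and $\chi$ a linear character of $H$. For $g\in G$ write $g=\mathsf{H}(g)\mathsf{T}(g)$ with $\mathsf{H}(g)\in H$, $\mathsf{T}(g)\in T$, and set $\chi_{\mathsf{H}}(g)=\chi(\mathsf{H}(g))$. Let $G$ act on $T\times T$ by $(s,t)\cdot g=(\mathsf{T}(sg),\mathsf{T}(tg))$. For $t\in T$, the orbit (orbital) $\mathcal{O}$ of $(1,t)$ is called orientable if for all $(u,v)\in\mathcal{O}$ and all $g,k\in Hu\cap t^{-1}Hv$ one has $\chi_{\mathsf{H}}(g)^{-1}\chi_{\mathsf{H}}(tg)=\chi_{\mathsf{H}}(k)^{-1}\chi_{\mathsf{H}}(tk)$. Then $\mathcal{O}$ is orientable if and only if $\chi(tht^{-1}h^{-1})=1$ for all $h\in H\cap t^{-1}Ht$.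
   Context: A right transversal $T$ to $H$ in $G$ is a set such that every $g\in G$ factorises uniquely as $g=ht$ with $h\in H$, $t\in T$. *)

(* Defs.v *)
From mathcomp Require Import all_boot all_order all_algebra all_fingroup all_solvable all_field all_character.
Set Implicit Arguments. Unset Strict Implicit. Unset Printing Implicit Defensive.
Import GRing.Theory Num.Theory.
Local Open Scope group_scope.

Section Defs.
Variable gT : finGroupType.

Definition Tpart (H T : {set gT}) (g : gT) : gT := transversal_repr 1 T (H :* g).

Definition Hpart (H T : {set gT}) (g : gT) : gT := g * (Tpart H T g)^-1.

Definition chiH (H : {group gT}) (T : {set gT}) (chi : 'CF(H)) (g : gT) : algC :=
  chi (Hpart H T g).

(* The orbit of (1,t) under the action (s,u).g = (T(sg), T(ug)) of G on T x T;
   since T(1 g) = T(g), it is {(T(g), T(tg)) | g in G}. *)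
Definition orbital (G H T : {set gT}) (t : gT) : {set gT * gT} :=
  [set (Tpart H T g, Tpart H T (t * g)) | g in G].

Definition orientable (G H : {group gT}) (T : {set gT}) (chi : 'CF(H)) (t : gT) : Prop :=
  forall u v, (u, v) \in orbital G H T t ->
  forall g k, g \in (H :* u) :&: (t^-1 *: (H :* v)) ->
              k \in (H :* u) :&: (t^-1 *: (H :* v)) ->
  ((chiH T chi g)^-1 * chiH T chi (t * g) = (chiH T chi k)^-1 * chiH T chi (t * k))%R.
End Defs.

(* Main.v *)
Require Import Defs.
From mathcomp Require Import all_boot all_order all_algebra all_fingroup all_solvable all_field all_character.
Import GRing.Theory Num.Theory.
Local Open Scope group_scope.

Section Aux.
Variables (gT : finGroupType) (G H : {group gT}) (T : {set gT}).
Hypotheses (sHG : H \subset G) (trT : is_transversal T (rcosets H G) G).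

Lemma Tpart_spec g : g \in G -> Tpart H T g \in T /\ g \in H :* Tpart H T g.
Proof.
move=> Gg; have P : H :* g \in rcosets H G by apply/rcosetsP; exists g.
split; first exact: (repr_mem_transversal trT).
by rewrite rcoset_sym; apply: (repr_mem_pblock trT).
Qed.

Lemma Tpart_eq u g : u \in T -> g \in H :* u -> Tpart H T g = u.
Proof.
move=> Tu gu.
have Gu : u \in G by apply: (subsetP (transversal_sub trT)).
have Gg : g \in G.
  by case/rcosetP: gu => a Ha ->; rewrite groupM // (subsetP sHG).
have P : H :* g \in rcosets H G by apply/rcosetsP; exists g.
have := setI_transversal_pblock trT 1 P.
move/setP/(_ u); rewrite !inE Tu -rcoset_sym gu /=.
by move/esym/eqP.
Qed.

Lemma chiH_eq (chi : 'CF(H)) u g : u \in T -> g \in H :* u ->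
  chiH T chi g = chi (g * u^-1).
Proof. by move=> Tu gu; rewrite /chiH /Hpart (Tpart_eq _ _ Tu gu). Qed.
End Aux.
Arguments Tpart_eq {gT G H T} sHG trT {u g}.
Arguments Tpart_spec {gT G H T} trT {g}.
Arguments chiH_eq {gT G H T} sHG trT chi {u g}.

Theorem proposition3p6 (gT : finGroupType) (G H : {group gT}) (T : {set gT})
    (chi : 'CF(H)) (t : gT) :
  H \subset G ->
  is_transversal T (rcosets H G) G ->
  1 \in T ->
  chi \is a linear_char ->
  t \in T ->
  orientable G T chi t <->
  (forall h, h \in H :&: (H :^ t) -> chi (t * h * t^-1 * h^-1) = 1%R).
Proof.
move=> sHG trT T1 lchi Tt.
have Gt : t \in G by apply: (subsetP (transversal_sub trT)).
split.
- move=> Hor h /setIP[Hh Hth].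
  have tht : t * h * t^-1 \in H.
    by move: Hth; rewrite mem_conjg conjgE invgK mulgA.
  have e1 : Tpart H T 1 = 1 by apply: (Tpart_eq sHG trT T1); apply: rcoset_refl.
  have et : Tpart H T t = t by apply: (Tpart_eq sHG trT Tt); apply: rcoset_refl.
  have orb : (1, t) \in orbital G H T t.
    by apply/imsetP; exists 1; rewrite ?group1 // mulg1 e1 et.
  have m1 : 1 \in (H :* 1) :&: (t^-1 *: (H :* t)).
    by rewrite !inE rcoset1 group1 mem_lcoset invgK mulg1 rcoset_refl.
  have mh : h \in (H :* 1) :&: (t^-1 *: (H :* t)).
    by rewrite !inE rcoset1 Hh mem_lcoset invgK mem_rcoset.
  have := Hor _ _ orb _ _ m1 mh.
  rewrite mulg1 (chiH_eq sHG trT chi T1 (rcoset_refl _ _)).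
  rewrite (chiH_eq sHG trT chi Tt (rcoset_refl _ _)).
  rewrite (chiH_eq sHG trT chi T1 (g := h)); last by rewrite rcoset1.
  rewrite (chiH_eq sHG trT chi Tt (g := t * h)); last by rewrite mem_rcoset.
  rewrite !mulgV invg1 mulg1 lin_char1 // invr1 mul1r => E.
  have nz : chi h != 0%R by apply: lin_char_neq0.
  rewrite lin_charM ?groupV // lin_charV //.
  have -> : chi (t * h * t^-1) = chi h.
    by apply: (mulfI (invr_neq0 nz)); rewrite -E mulVf.
  by rewrite mulfV.
- move=> C u v /imsetP[g0 Gg0 [-> ->]] g k.
  have [Tu gu] := Tpart_spec trT Gg0.
  have [Tv tgv] := Tpart_spec trT (groupM Gt Gg0).
  set u' := Tpart H T g0 in Tu gu *; set v' := Tpart H T (t * g0) in Tv tgv *.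
  rewrite !inE !mem_lcoset !invgK.
  move=> /andP[gH tgH] /andP[kH tkH].
  rewrite (chiH_eq sHG trT chi Tu gH) (chiH_eq sHG trT chi Tu kH).
  rewrite (chiH_eq sHG trT chi Tv tgH) (chiH_eq sHG trT chi Tv tkH).
  move: gH tgH kH tkH; rewrite !mem_rcoset => gH tgH kH tkH.
  set h := k * g^-1.
  have Hh : h \in H.
    have -> : h = k * u'^-1 * (g * u'^-1)^-1.
      by rewrite /h invMg invgK !mulgA mulgKV.
    by rewrite groupM ?groupV.
  have tht : t * h * t^-1 \in H.
    have -> : t * h * t^-1 = t * k * v'^-1 * (t * g * v'^-1)^-1.
      by rewrite /h !invMg invgK !mulgA mulgKV.
    by rewrite groupM ?groupV.
  have Hth : h \in H :^ t by rewrite mem_conjg conjgE invgK mulgA.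
  have e1 : k * u'^-1 = h * (g * u'^-1) by rewrite /h !mulgA mulgKV.
  have e2 : t * k * v'^-1 = (t * h * t^-1) * (t * g * v'^-1).
    by rewrite /h !mulgA !mulgKV.
  have nz : chi h != 0%R by apply: lin_char_neq0.
  have nza : chi (g * u'^-1) != 0%R by apply: lin_char_neq0.
  have E : chi (t * h * t^-1) = chi h.
    have := C h (introT setIP (conj Hh Hth)).
    rewrite lin_charM ?groupV // lin_charV // => E.
    by apply: (mulIf (invr_neq0 nz)); rewrite E mulfV.
  rewrite e1 e2 (lin_charM lchi Hh gH) (lin_charM lchi tht tgH) E invfM.
  set a := chi h in nz *; set b := chi (g * u'^-1); set c := chi (t * g * v'^-1).
  by rewrite [RHS]mulrACA mulVf // mul1r.
Qed.
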